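(* Let $(\mathcal{E},\mathcal{M})$ be a stable orthogonal factorization system on a category $\mathcal{D}$ with pullbacks, and let $\mathcal{A}$ be a category with a terminal object $1$. Let $(\mathcal{E}',\mathcal{M}')$ be the factorization system on $[\mathcal{A},\mathcal{D}]$ where $\mathcal{E}'$ consists of the natural transformations $e$ with $e_1\in\mathcal{E}$ and $\mathcal{M}'$ consists of the cartesian natural transformations $m$ with $m_1\in\mathcal{M}$. Then $(\mathcal{E}',\mathcal{M}')$ and the componentwise lifting of $(\mathcal{E},\mathcal{M})$ to $[\mathcal{A},\mathcal{D}]$ both restrict to the same factorization system on $\mathrm{CartNt}[\mathcal{A},\mathcal{D}]$, the category of all functors $\mathcal{A}\to\mathcal{D}$ and cartesian natural transformations.
   Context: An orthogonal factorization system $(\mathcal{E},\mathcal{M})$: both classes contain all isomorphisms and are closed under composition; each commuting square $g\circ e = m\circ f$ with $e\in\mathcal{E}$, $m\in\mathcal{M}$ has a unique diagonal; every morphism factors as $m\circ e$ with $e\in\mathcal{E}$, $m\in\mathcal{M}$. It is stable if $\mathcal{E}$ is closed under pullback along arbitrary morphisms. A natural transformation is cartesian if all its naturality squares are pullbacks. The componentwise lifting consists of the natural transformations all of whose components lie in $\mathcal{E}$, respectively in $\mathcal{M}$. Restricting a factorization system to $\mathrm{CartNt}[\mathcal{A},\mathcal{D}]$ means intersecting both classes with the cartesian natural transformations. *)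

(* Defs.v *)
From Stdlib Require Import FunctionalExtensionality ProofIrrelevance.

Set Implicit Arguments.
Unset Strict Implicit.

Record Category := {
  Ob :> Type;
  Hom : Ob -> Ob -> Type;
  idm : forall a, Hom a a;
  comp : forall a b c, Hom b c -> Hom a b -> Hom a c;
  comp_id_l : forall a b (f : Hom a b), comp (idm b) f = f;
  comp_id_r : forall a b (f : Hom a b), comp f (idm a) = f;
  comp_assoc : forall a b c d (f : Hom a b) (g : Hom b c) (h : Hom c d),
      comp h (comp g f) = comp (comp h g) f
}.
Arguments Hom {C} a b : rename.
Arguments idm {C} a : rename.
Arguments comp {C a b c} g f : rename.

Notation "g ∘ f" := (comp g f) (at level 40, left associativity).

Definition MorClass (C : Category) := forall a b : C, Hom a b -> Prop.

Definition is_terminal (C : Category) (t : C) : Prop :=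
  forall a : C, exists! f : Hom a t, True.

Definition is_pullback (C : Category) (p a b c : C)
  (pa : Hom p a) (pb : Hom p b) (f : Hom a c) (g : Hom b c) : Prop :=
  f ∘ pa = g ∘ pb /\
  forall (q : C) (qa : Hom q a) (qb : Hom q b),
    f ∘ qa = g ∘ qb -> exists! u : Hom q p, pa ∘ u = qa /\ pb ∘ u = qb.

Definition has_pullbacks (C : Category) : Prop :=
  forall (a b c : C) (f : Hom a c) (g : Hom b c),
    exists (p : C) (pa : Hom p a) (pb : Hom p b), is_pullback pa pb f g.

Definition stable (C : Category) (E : MorClass C) : Prop :=
  forall (p a b c : C) (pa : Hom p a) (e' : Hom p b) (e : Hom a c) (g : Hom b c),
    is_pullback pa e' e g -> E _ _ e -> E _ _ e'.

(** * Orthogonal factorization systems on a wide subcategory.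
    [W] selects the morphisms of a wide subcategory of C (same objects,
    composition and identities of C).  [OFS_in C W E M] says that (E, M) is
    an orthogonal factorization system on that subcategory: all notions
    (isomorphisms, diagonals, factorizations) are taken inside it. *)
Definition is_iso_in (C : Category) (W : MorClass C) (a b : C) (f : Hom a b) : Prop :=
  W _ _ f /\ exists g : Hom b a, W _ _ g /\ g ∘ f = idm a /\ f ∘ g = idm b.

Definition OFS_in (C : Category) (W E M : MorClass C) : Prop :=
  (forall a b (f : Hom a b), E _ _ f -> W _ _ f) /\
  (forall a b (f : Hom a b), M _ _ f -> W _ _ f) /\
  (forall a b (f : Hom a b), is_iso_in W f -> E _ _ f) /\
  (forall a b (f : Hom a b), is_iso_in W f -> M _ _ f) /\
  (forall a b c (f : Hom a b) (g : Hom b c), E _ _ f -> E _ _ g -> E _ _ (g ∘ f)) /\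
  (forall a b c (f : Hom a b) (g : Hom b c), M _ _ f -> M _ _ g -> M _ _ (g ∘ f)) /\
  (forall a b c d (e : Hom a b) (f : Hom a c) (g : Hom b d) (m : Hom c d),
      E _ _ e -> M _ _ m -> W _ _ f -> W _ _ g -> g ∘ e = m ∘ f ->
      exists dg : Hom b c,
        (W _ _ dg /\ dg ∘ e = f /\ m ∘ dg = g) /\
        forall dg' : Hom b c, W _ _ dg' -> dg' ∘ e = f -> m ∘ dg' = g -> dg' = dg) /\
  (forall a b (h : Hom a b), W _ _ h ->
      exists (x : C) (e : Hom a x) (m : Hom x b), E _ _ e /\ M _ _ m /\ h = m ∘ e).

Definition OFS (C : Category) (E M : MorClass C) : Prop :=
  OFS_in (fun _ _ _ => True) E M.

Record Functor (A D : Category) := {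
  fobj :> A -> D;
  fmap : forall a b : A, Hom a b -> Hom (fobj a) (fobj b);
  fmap_id : forall a, fmap (idm a) = idm (fobj a);
  fmap_comp : forall a b c (f : Hom a b) (g : Hom b c),
      fmap (g ∘ f) = fmap g ∘ fmap f
}.
Arguments fmap {A D} F {a b} f : rename.

Record NatTrans (A D : Category) (F G : Functor A D) := {
  cmp :> forall a : A, Hom (F a) (G a);
  naturality : forall a b (f : Hom a b), cmp b ∘ fmap F f = fmap G f ∘ cmp a
}.

Lemma nt_eq (A D : Category) (F G : Functor A D) (al be : NatTrans F G) :
  (forall a, al a = be a) -> al = be.
Proof.
  destruct al as [c1 n1], be as [c2 n2]; simpl; intros H.
  assert (c1 = c2) by (apply functional_extensionality_dep; exact H).
  subst c2. f_equal. apply proof_irrelevance.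
Qed.

Definition nt_id (A D : Category) (F : Functor A D) : NatTrans F F.
Proof.
  refine {| cmp := fun a => idm (F a) |}.
  intros a b f. rewrite comp_id_l, comp_id_r. reflexivity.
Defined.

Definition nt_comp (A D : Category) (F G H : Functor A D)
  (be : NatTrans G H) (al : NatTrans F G) : NatTrans F H.
Proof.
  refine {| cmp := fun a => be a ∘ al a |}.
  intros a b f. rewrite <- comp_assoc, naturality, comp_assoc, naturality,
    comp_assoc. reflexivity.
Defined.

Definition FunCat (A D : Category) : Category.
Proof.
  refine {| Ob := Functor A D; Hom := @NatTrans A D;
            idm := @nt_id A D; comp := @nt_comp A D |}.
  - intros F G al. apply nt_eq. intro x. simpl. apply comp_id_l.
  - intros F G al. apply nt_eq. intro x. simpl. apply comp_id_r.
  - intros F G H K al be ga. apply nt_eq. intro x. simpl. apply comp_assoc.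
Defined.

Definition cartesian (A D : Category) : MorClass (FunCat A D) :=
  fun F G (al : NatTrans F G) =>
    forall (a b : A) (f : Hom a b),
      is_pullback (fmap F f) (al a) (al b) (fmap G f).

Definition componentwise (A D : Category) (K : MorClass D) : MorClass (FunCat A D) :=
  fun F G (al : NatTrans F G) => forall a : A, K _ _ (al a).

(** The classes E' and M' (relative to the chosen terminal object t of A). *)
Definition Eprime (A D : Category) (t : A) (E : MorClass D) : MorClass (FunCat A D) :=
  fun F G (al : NatTrans F G) => E _ _ (al t).

Definition Mprime (A D : Category) (t : A) (M : MorClass D) : MorClass (FunCat A D) :=
  fun F G (al : NatTrans F G) => cartesian al /\ M _ _ (al t).

Definition restrict_cart (A D : Category) (K : MorClass (FunCat A D)) : MorClass (FunCat A D) :=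
  fun F G al => K F G al /\ cartesian al.

(* Main.v *)
Require Import Defs.
From Stdlib Require Import FunctionalExtensionality ProofIrrelevance IndefiniteDescription PropExtensionality.
Module Gen.
Set Implicit Arguments.
Unset Strict Implicit.



Section Gen.
Variable C : Category.

Lemma rw2 (a b b' c d : C) (g : Hom b c) (f : Hom a b) (g' : Hom b' c) (f' : Hom a b') (h : Hom d a) :
  g ∘ f = g' ∘ f' -> g ∘ (f ∘ h) = g' ∘ (f' ∘ h).
Proof. intro E. rewrite !comp_assoc, E. reflexivity. Qed.

Lemma pb_sym (p a b c : C) (pa : Hom p a) (pb : Hom p b) (f : Hom a c) (g : Hom b c) :
  is_pullback pa pb f g -> is_pullback pb pa g f.
Proof.
  intros [Hc Hu]. split; [symmetry; exact Hc|].
  intros q qa qb Hq. destruct (Hu q qb qa (eq_sym Hq)) as [u [[H1 H2] Hun]].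
  exists u. split; [split; assumption|]. intros v [H1' H2']. apply Hun; split; assumption.
Qed.

Lemma pb_mono (p a b c : C) (pa : Hom p a) (pb : Hom p b) (f : Hom a c) (g : Hom b c) :
  is_pullback pa pb f g -> forall q (u v : Hom q p), pa ∘ u = pa ∘ v -> pb ∘ u = pb ∘ v -> u = v.
Proof.
  intros [Hc Hu] q u v H1 H2.
  destruct (Hu q (pa ∘ u) (pb ∘ u)) as [w [_ Hw]].
  { rewrite !comp_assoc, Hc. reflexivity. }
  rewrite <- (Hw u (conj eq_refl eq_refl)). apply Hw. split; symmetry; assumption.
Qed.

Lemma pb_paste (P Q R S T U : C) (x : Hom P Q) (y : Hom Q R) (p : Hom P S) (q : Hom Q T)
  (r : Hom R U) (z : Hom S T) (w : Hom T U) :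
  is_pullback x p q z -> is_pullback y q r w -> is_pullback (y ∘ x) p r (w ∘ z).
Proof.
  intros HL HR. pose proof HL as [HLc HLu]. pose proof HR as [HRc HRu]. split.
  - rewrite comp_assoc, HRc, <- comp_assoc, HLc, comp_assoc. reflexivity.
  - intros V a b Hab.
    destruct (HRu V a (z ∘ b)) as [k [[Hk1 Hk2] _]].
    { rewrite Hab, comp_assoc. reflexivity. }
    destruct (HLu V k b Hk2) as [l [[Hl1 Hl2] _]].
    exists l. split.
    + split; [rewrite <- comp_assoc, Hl1; exact Hk1 | exact Hl2].
    + intros l' [H1 H2]. apply (pb_mono HL).
      * apply (pb_mono HR).
        -- rewrite Hl1, Hk1, comp_assoc, H1. reflexivity.
        -- rewrite Hl1, Hk2, comp_assoc, HLc, <- comp_assoc, H2. reflexivity.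
      * rewrite Hl2, H2. reflexivity.
Qed.

Lemma pb_cancel (P Q R S T U : C) (x : Hom P Q) (y : Hom Q R) (p : Hom P S) (q : Hom Q T)
  (r : Hom R U) (z : Hom S T) (w : Hom T U) :
  q ∘ x = z ∘ p -> is_pullback y q r w -> is_pullback (y ∘ x) p r (w ∘ z) ->
  is_pullback x p q z.
Proof.
  intros Hc HR HO. pose proof HR as [HRc HRu]. pose proof HO as [HOc HOu]. split; [exact Hc|].
  intros V a b Hab.
  destruct (HOu V (y ∘ a) b) as [l [[Hl1 Hl2] _]].
  { rewrite comp_assoc, HRc, <- comp_assoc, Hab, comp_assoc. reflexivity. }
  assert (Hxl : x ∘ l = a).
  { apply (pb_mono HR).
    - rewrite comp_assoc. exact Hl1.
    - rewrite comp_assoc, Hc, <- comp_assoc, Hl2. symmetry; exact Hab. }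
  exists l. split; [split; assumption|].
  intros l' [H1 H2]. apply (pb_mono HO).
  - rewrite <- !comp_assoc, H1, Hxl. reflexivity.
  - rewrite H2, Hl2. reflexivity.
Qed.

Lemma M_stable (E M : MorClass C) : OFS E M ->
  forall (p a b c : C) (pa : Hom p a) (m' : Hom p b) (m : Hom a c) (g : Hom b c),
  is_pullback pa m' m g -> M _ _ m -> M _ _ m'.
Proof.
  intros (_ & _ & HisoE & HisoM & HcE & HcM & Hdiag & Hfact) p a b c pa m' m g HP Hm.
  destruct (Hfact _ _ m' I) as (X & e' & n & He & Hn & Hm').
  destruct (Hdiag _ _ _ _ e' pa (g ∘ n) m He Hm I I) as [d [[_ [Hd1 Hd2]] _]].
  { rewrite <- comp_assoc, <- Hm'. symmetry. apply (proj1 HP). }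
  pose proof HP as [HPc HPu].
  destruct (HPu X d n Hd2) as [k [[Hk1 Hk2] _]].
  assert (Hke : k ∘ e' = idm p).
  { apply (pb_mono HP).
    - rewrite comp_assoc, Hk1, Hd1, comp_id_r. reflexivity.
    - rewrite comp_assoc, Hk2, comp_id_r. symmetry; exact Hm'. }
  assert (Hek : e' ∘ k = idm X).
  { destruct (Hdiag _ _ _ _ e' e' n n He Hn I I eq_refl) as [d0 [_ Hu]].
    transitivity d0; [|symmetry]; apply Hu; try exact I.
    - rewrite <- comp_assoc, Hke. apply comp_id_r.
    - rewrite comp_assoc, <- Hm'. exact Hk2.
    - apply comp_id_l.
    - apply comp_id_r. }
  rewrite Hm'. apply HcM; [|exact Hn]. apply HisoM. split; [exact I|].
  exists k. split; [exact I| split; assumption].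
Qed.

End Gen.
End Gen.
Import Gen.
Module MainL.

Lemma class_ext (C : Category) (K1 K2 : MorClass C) :
  (forall a b f, K1 a b f <-> K2 a b f) -> K1 = K2.
Proof.
  intro H. apply functional_extensionality_dep; intro a.
  apply functional_extensionality_dep; intro b.
  apply functional_extensionality_dep; intro f.
  apply propositional_extensionality. apply H.
Qed.

Lemma OFS_diag (D : Category) (E M : MorClass D) : OFS E M ->
  forall (a b c d : D) (e : Hom a b) (f : Hom a c) (g : Hom b d) (m : Hom c d),
  E _ _ e -> M _ _ m -> g ∘ e = m ∘ f ->
  exists dg : Hom b c, (dg ∘ e = f /\ m ∘ dg = g) /\
     forall dg', dg' ∘ e = f -> m ∘ dg' = g -> dg' = dg.
Proof.
  intros (_ & _ & _ & _ & _ & _ & Hdiag & _) a b c d e f g m He Hm Hsq.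
  destruct (Hdiag _ _ _ _ e f g m He Hm I I Hsq) as [dg [[_ [H1 H2]] Hu]].
  exists dg. split; [split; assumption|]. intros dg' H1' H2'. apply Hu; auto.
Qed.
Arguments OFS_diag {D E M} _ {a b c d e f g m} _ _ _.

Lemma cart_comp (A D : Category) (F G H : Functor A D) (al : NatTrans F G) (be : NatTrans G H) :
  cartesian (A:=A) (D:=D) al -> cartesian (A:=A) (D:=D) be ->
  cartesian (A:=A) (D:=D) (nt_comp be al).
Proof.
  intros Ha Hb a b f. simpl. apply pb_sym.
  apply pb_paste with (q := fmap G f); apply pb_sym; auto.
Qed.

Lemma cart_cancel (A D : Category) (F G H : Functor A D) (d : NatTrans F G) (m : NatTrans G H) :
  cartesian (A:=A) (D:=D) m -> cartesian (A:=A) (D:=D) (nt_comp m d) ->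
  cartesian (A:=A) (D:=D) d.
Proof.
  intros Hm Hmd a b f. apply pb_sym.
  apply pb_cancel with (y := m a) (r := fmap H f) (w := m b).
  - symmetry. apply naturality.
  - apply pb_sym, Hm.
  - apply pb_sym. exact (Hmd a b f).
Qed.

Section Diag.
Variables (A D : Category) (E M : MorClass D) (hofs : OFS E M).
Variables (F G H K : Functor A D) (e : NatTrans F G) (f : NatTrans F H)
  (g : NatTrans G K) (m : NatTrans H K).
Hypotheses (He : forall x : A, E _ _ (e x)) (Hm : forall x : A, M _ _ (m x))
  (Hsq : forall x : A, g x ∘ e x = m x ∘ f x).

Definition dcmp x : Hom (G x) (H x) :=
  proj1_sig (constructive_indefinite_description _
     (OFS_diag hofs (He x) (Hm x) (Hsq x))).

Lemma dcmp_spec x : (dcmp x ∘ e x = f x /\ m x ∘ dcmp x = g x) /\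
     forall dg', dg' ∘ e x = f x -> m x ∘ dg' = g x -> dg' = dcmp x.
Proof. unfold dcmp. destruct constructive_indefinite_description. exact a. Qed.

Lemma dcmp_nat {x y} (u : Hom x y) : dcmp y ∘ fmap G u = fmap H u ∘ dcmp x.
Proof.
  assert (Hs : (fmap K u ∘ g x) ∘ e x = m y ∘ (fmap H u ∘ f x)).
  { rewrite <- comp_assoc, Hsq, comp_assoc, <- naturality, comp_assoc. reflexivity. }
  destruct (OFS_diag hofs (He x) (Hm y) Hs) as [d0 [_ Hu]].
  destruct (dcmp_spec x) as [[Hx1 Hx2] _]. destruct (dcmp_spec y) as [[Hy1 Hy2] _].
  transitivity d0; [|symmetry]; apply Hu.
  - rewrite <- comp_assoc, <- naturality, comp_assoc, Hy1. apply naturality.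
  - rewrite comp_assoc, Hy2. apply naturality.
  - rewrite <- comp_assoc, Hx1. reflexivity.
  - rewrite comp_assoc, naturality, <- comp_assoc, Hx2. reflexivity.
Qed.

Definition dnat : NatTrans G H := {| cmp := dcmp; naturality := @dcmp_nat |}.

Lemma dnat_eq1 : nt_comp dnat e = f.
Proof. apply nt_eq. intro x. apply (dcmp_spec x). Qed.
Lemma dnat_eq2 : nt_comp m dnat = g.
Proof. apply nt_eq. intro x. apply (dcmp_spec x). Qed.
End Diag.

Section Fact.
Variables (A D : Category) (E M : MorClass D) (hofs : OFS E M) (hstable : stable E).
Variables (t : A) (bang : forall a : A, Hom a t) (hbang : forall {a} (f g : Hom a t), f = g).
Variables (X Z : Functor A D) (h : NatTrans X Z) (Hh : cartesian (A:=A) (D:=D) h).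
Variables (It : D) (et : Hom (X t) It) (mt : Hom It (Z t)) (Hht : h t = mt ∘ et)
  (Het : E _ _ et) (Hmt : M _ _ mt).
Variable pbc : forall {a b c : D} (f : Hom a c) (g : Hom b c),
  {p : D & {pa : Hom p a & {pb : Hom p b | is_pullback pa pb f g}}}.

Definition Pa (a : A) : D := projT1 (pbc (fmap Z (bang a)) mt).
Definition ma a : Hom (Pa a) (Z a) := projT1 (projT2 (pbc (fmap Z (bang a)) mt)).
Definition pia a : Hom (Pa a) It := proj1_sig (projT2 (projT2 (pbc (fmap Z (bang a)) mt))).
Lemma Hpb a : is_pullback (ma a) (pia a) (fmap Z (bang a)) mt.
Proof. exact (proj2_sig (projT2 (projT2 (pbc (fmap Z (bang a)) mt)))). Qed.

Lemma comm_u {a b} (u : Hom a b) : fmap Z (bang b) ∘ (fmap Z u ∘ ma a) = mt ∘ pia a.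
Proof.
  rewrite comp_assoc, <- fmap_comp, (hbang (bang b ∘ u) (bang a)). exact (proj1 (Hpb a)).
Qed.

Definition Imap {a b} (u : Hom a b) : Hom (Pa a) (Pa b) :=
  proj1_sig (constructive_indefinite_description _ (proj2 (Hpb b) _ _ _ (comm_u u))).

Lemma Imap_spec {a b} (u : Hom a b) : ma b ∘ Imap u = fmap Z u ∘ ma a /\ pia b ∘ Imap u = pia a.
Proof. unfold Imap. exact (proj1 (proj2_sig (constructive_indefinite_description _ (proj2 (Hpb b) _ _ _ (comm_u u))))). Qed.

Lemma Imap_id a : Imap (idm a) = idm (Pa a).
Proof.
  destruct (Imap_spec (idm a)) as [H1 H2].
  apply (pb_mono (Hpb a)).
  - rewrite H1, fmap_id, comp_id_l, comp_id_r. reflexivity.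
  - rewrite H2, comp_id_r. reflexivity.
Qed.

Lemma Imap_comp {a b c} (f : Hom a b) (g : Hom b c) : Imap (g ∘ f) = Imap g ∘ Imap f.
Proof.
  destruct (Imap_spec (g ∘ f)) as [H1 H2].
  destruct (Imap_spec f) as [F1 F2]. destruct (Imap_spec g) as [G1 G2].
  apply (pb_mono (Hpb c)).
  - rewrite H1, comp_assoc, G1, <- comp_assoc, F1, fmap_comp, comp_assoc. reflexivity.
  - rewrite H2, comp_assoc, G2, F2. reflexivity.
Qed.

Definition Ifun : Functor A D :=
  {| fobj := Pa; fmap := @Imap; fmap_id := Imap_id; fmap_comp := @Imap_comp |}.

Definition mnat : NatTrans Ifun Z :=
  @Build_NatTrans A D Ifun Z ma (fun a b u => proj1 (Imap_spec u)).

Lemma comm_e a : fmap Z (bang a) ∘ h a = mt ∘ (et ∘ fmap X (bang a)).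
Proof. rewrite <- naturality, Hht, comp_assoc. reflexivity. Qed.

Definition ecmp a : Hom (X a) (Pa a) :=
  proj1_sig (constructive_indefinite_description _ (proj2 (Hpb a) _ _ _ (comm_e a))).

Lemma ecmp_spec a : ma a ∘ ecmp a = h a /\ pia a ∘ ecmp a = et ∘ fmap X (bang a).
Proof. unfold ecmp. exact (proj1 (proj2_sig (constructive_indefinite_description _ (proj2 (Hpb a) _ _ _ (comm_e a))))). Qed.

Lemma ecmp_nat a b (u : Hom a b) : ecmp b ∘ fmap X u = fmap Ifun u ∘ ecmp a.
Proof.
  simpl. destruct (Imap_spec u) as [U1 U2].
  destruct (ecmp_spec a) as [A1 A2]. destruct (ecmp_spec b) as [B1 B2].
  apply (pb_mono (Hpb b)).
  - rewrite !comp_assoc, B1, U1, naturality, <- comp_assoc, A1. reflexivity.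
  - rewrite !comp_assoc, B2, U2, A2, <- comp_assoc, <- fmap_comp,
      (hbang (bang b ∘ u) (bang a)). reflexivity.
Qed.

Definition enat : NatTrans X Ifun := @Build_NatTrans A D X Ifun ecmp ecmp_nat.

Lemma fact_eq : nt_comp mnat enat = h.
Proof. apply nt_eq. intro a. apply (ecmp_spec a). Qed.

Lemma m_cart : cartesian (A:=A) (D:=D) mnat.
Proof.
  intros a b u. simpl.
  apply pb_cancel with (y := pia b) (r := mt) (w := fmap Z (bang b)).
  - apply (Imap_spec u).
  - apply pb_sym, Hpb.
  - rewrite (proj2 (Imap_spec u)), <- fmap_comp, (hbang (bang b ∘ u) (bang a)).
    apply pb_sym, Hpb.
Qed.

Lemma m_M a : M _ _ (ma a).
Proof. apply (M_stable hofs (pb_sym (Hpb a)) Hmt). Qed.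

Lemma e_cart : cartesian (A:=A) (D:=D) enat.
Proof. apply cart_cancel with (m := mnat). apply m_cart. rewrite fact_eq. exact Hh. Qed.

Lemma e_E a : E _ _ (ecmp a).
Proof.
  apply (hstable _ _ _ _ (fmap X (bang a)) (ecmp a) et (pia a)); [|exact Het].
  apply pb_sym.
  apply pb_cancel with (y := ma a) (r := fmap Z (bang a)) (w := mt).
  - apply (ecmp_spec a).
  - apply Hpb.
  - rewrite (proj1 (ecmp_spec a)), <- Hht. apply pb_sym, Hh.
Qed.

Lemma fact_exists : exists (I : Functor A D) (e : NatTrans X I) (m : NatTrans I Z),
  ((forall a, E _ _ (e a : Hom (X a) (I a))) /\ cartesian (A:=A) (D:=D) e) /\
  ((forall a, M _ _ (m a : Hom (I a) (Z a))) /\ cartesian (A:=A) (D:=D) m) /\ h = nt_comp m e.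
Proof.
  exists Ifun, enat, mnat. split; [split; [exact e_E | exact e_cart]|].
  split; [split; [exact m_M | exact m_cart]|]. symmetry. exact fact_eq.
Qed.
End Fact.

End MainL.
Import MainL.

Theorem proposition4p9 (A D : Category) (E M : MorClass D) (t : A)
  (ht : is_terminal t) (hpb : has_pullbacks D)
  (hofs : OFS E M) (hstable : stable E) :
  (forall (F G : Functor A D) (al : NatTrans F G),
      restrict_cart (Eprime t E) al <-> restrict_cart (componentwise E) al) /\
  (forall (F G : Functor A D) (al : NatTrans F G),
      restrict_cart (Mprime t M) al <-> restrict_cart (componentwise M) al) /\
  OFS_in (@cartesian A D) (restrict_cart (Eprime t E)) (restrict_cart (Mprime t M)) /\
  OFS_in (@cartesian A D) (restrict_cart (componentwise E)) (restrict_cart (componentwise M)).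
Proof.
  pose (bang := fun a => proj1_sig (constructive_indefinite_description _ (ht a))).
  assert (hbang : forall a (f g : Hom a t), f = g).
  { intros a f g. destruct (ht a) as [u [_ Hu]]. rewrite <- (Hu f I), <- (Hu g I). reflexivity. }
  assert (pbc : forall (a b c : D) (f : Hom a c) (g : Hom b c),
    {p : D & {pa : Hom p a & {pb : Hom p b | is_pullback pa pb f g}}}).
  { intros a b c f g.
    destruct (constructive_indefinite_description _ (hpb a b c f g)) as [p Hp].
    destruct (constructive_indefinite_description _ Hp) as [pa Hpa].
    destruct (constructive_indefinite_description _ Hpa) as [pb Hpb'].
    exact (existT _ p (existT _ pa (exist _ pb Hpb'))). }
  pose proof hofs as (_ & _ & HisoE & HisoM & HcE & HcM & Hdiag & Hfact).
  assert (HE : forall (F G : Functor A D) (al : NatTrans F G),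
      restrict_cart (Eprime t E) al <-> restrict_cart (componentwise E) al).
  { intros F G al. unfold restrict_cart, Eprime, componentwise.
    split; intros [H1 H2]; split; auto.
    intro a. exact (hstable _ _ _ _ _ _ _ _ (H2 a t (bang a)) H1). }
  assert (HM : forall (F G : Functor A D) (al : NatTrans F G),
      restrict_cart (Mprime t M) al <-> restrict_cart (componentwise M) al).
  { intros F G al. unfold restrict_cart, Mprime, componentwise.
    split; intros [H1 H2].
    - split; auto. intro a. exact (M_stable hofs (H2 a t (bang a)) (proj2 H1)).
    - split; auto. }
  assert (HO : OFS_in (@cartesian A D) (restrict_cart (componentwise E))
                 (restrict_cart (componentwise M))).
  { unfold OFS_in. split; [|split; [|split; [|split; [|split; [|split; [|split]]]]]].
    - intros F G f [_ H]; exact H.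
    - intros F G f [_ H]; exact H.
    - intros F G al [Hc [g [Hg [H1 H2]]]]. split; [|exact Hc]. intro a.
      apply HisoE. split; [exact I|]. exists (g a). split; [exact I|]. split.
      + exact (f_equal (fun n : NatTrans F F => cmp n a) H1).
      + exact (f_equal (fun n : NatTrans G G => cmp n a) H2).
    - intros F G al [Hc [g [Hg [H1 H2]]]]. split; [|exact Hc]. intro a.
      apply HisoM. split; [exact I|]. exists (g a). split; [exact I|]. split.
      + exact (f_equal (fun n : NatTrans F F => cmp n a) H1).
      + exact (f_equal (fun n : NatTrans G G => cmp n a) H2).
    - intros F G H f g [Hf Cf] [Hg Cg]. split.
      + intro a. exact (HcE _ _ _ _ _ (Hf a) (Hg a)).
      + exact (cart_comp _ _ _ _ _ _ _ Cf Cg).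
    - intros F G H f g [Hf Cf] [Hg Cg]. split.
      + intro a. exact (HcM _ _ _ _ _ (Hf a) (Hg a)).
      + exact (cart_comp _ _ _ _ _ _ _ Cf Cg).
    - intros F G H K e f g m [He Ce] [Hm Cm] Cf Cg Hsq.
      assert (Hsq' : forall x, g x ∘ e x = m x ∘ f x).
      { intro x. exact (f_equal (fun n : NatTrans F K => cmp n x) Hsq). }
      exists (dnat A D E M hofs F G H K e f g m He Hm Hsq'). split; [split; [|split]|].
      + apply cart_cancel with (m := m); [exact Cm|].
        rewrite (dnat_eq2 A D E M hofs F G H K e f g m He Hm Hsq'). exact Cg.
      + exact (dnat_eq1 A D E M hofs F G H K e f g m He Hm Hsq').
      + exact (dnat_eq2 A D E M hofs F G H K e f g m He Hm Hsq').
      + intros dg' _ H1 H2. apply nt_eq. intro x.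
        apply (proj2 (dcmp_spec A D E M hofs F G H K e f g m He Hm Hsq' x)).
        * exact (f_equal (fun n : NatTrans F H => cmp n x) H1).
        * exact (f_equal (fun n : NatTrans G K => cmp n x) H2).
    - intros X Z h Ch.
      destruct (Hfact _ _ (h t) I) as (It & et & mt & Het & Hmt & Hht).
      destruct (fact_exists A D E M hofs hstable t bang hbang X Z h Ch It et mt Hht Het Hmt pbc)
        as (I & e & m & He & Hm & Heq).
      exists I, e, m. split; [exact He|]. split; [exact Hm|]. exact Heq. }
  split; [exact HE|]. split; [exact HM|]. split; [|exact HO].
  rewrite (class_ext (FunCat A D) _ _ HE), (class_ext (FunCat A D) _ _ HM). exact HO.
Qed.
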